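(* Let $(\Omega,\mathcal{F})$ be a measurable space, $\mathcal{P}$ a nonempty set of probability measures on it, $\hat{\mathbb{E}}[Z]=\sup_{P\in\mathcal{P}}E_P[Z]$, and let $X,Y$ be random variables with $\hat{\mathbb{E}}[X^2]+\hat{\mathbb{E}}[Y^2]<\infty$. Suppose $\overline{\mu}_X=\underline{\mu}_X=:\mu_X$, and let $\rho_Y=\frac12(\overline{\mu}_Y+\underline{\mu}_Y)$. Then $$\overline{C}(X,Y)=\hat{\mathbb{E}}[(X-\mu_X)(Y-\rho_Y)],\qquad \underline{C}(X,Y)=-\hat{\mathbb{E}}[-(X-\mu_X)(Y-\rho_Y)].$$
   Context: For a random variable $W$ with $\hat{\mathbb{E}}[W^2]<\infty$: $\overline{\mu}_W=\hat{\mathbb{E}}[W]$, $\underline{\mu}_W=-\hat{\mathbb{E}}[-W]$, $M_W=[\underline{\mu}_W,\overline{\mu}_W]$. Upper covariance $\overline{C}(X,Y)=\max_{\mu_2\in M_Y}\min_{\mu_1\in M_X}\hat{\mathbb{E}}[(X-\mu_1)(Y-\mu_2)]$; lower covariance $\underline{C}(X,Y)=\min_{\mu_2\in M_Y}\max_{\mu_1\in M_X}\left(-\hat{\mathbb{E}}[-(X-\mu_1)(Y-\mu_2)]\right)$. *)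

(* Defs.v *)
From HB Require Import structures.
From mathcomp Require Import all_boot all_order all_algebra.
From mathcomp Require Import all_classical all_reals all_analysis.
Set Implicit Arguments. Unset Strict Implicit. Unset Printing Implicit Defensive.
Import Order.TTheory GRing.Theory Num.Theory.
Local Open Scope classical_set_scope.
Local Open Scope ring_scope.
Local Open Scope ereal_scope.

Section Sublinear.
Context (d : measure_display) (T : measurableType d) (R : realType).
Variable PP : set (probability T R).

Definition Ehat (Z : T -> R) : \bar R := ereal_sup [set 'E_P[Z] | P in PP].

Definition mu_up (W : T -> R) : \bar R := Ehat W.
Definition mu_lo (W : T -> R) : \bar R := - Ehat (fun w => (- W w)%R).

Definition Mset (W : T -> R) : set R :=
  [set m : R | mu_lo W <= m%:E <= mu_up W].

(* upper covariance: max_{m2 in M_Y} min_{m1 in M_X} Ehat[(X-m1)(Y-m2)]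
   (max/min rendered as sup/inf) *)
Definition upper_cov (X Y : T -> R) : \bar R :=
  ereal_sup [set ereal_inf [set Ehat (fun w => ((X w - m1) * (Y w - m2))%R)
                           | m1 in Mset X] | m2 in Mset Y].

Definition lower_cov (X Y : T -> R) : \bar R :=
  ereal_inf [set ereal_sup [set - Ehat (fun w => (- ((X w - m1) * (Y w - m2)))%R)
                           | m1 in Mset X] | m2 in Mset Y].
End Sublinear.

(* Main.v *)
Require Import Defs.
From HB Require Import structures.
From mathcomp Require Import all_boot all_order all_algebra.
From mathcomp Require Import all_classical all_reals all_analysis.
From mathcomp Require Import measurable_realfun.
From mathcomp Require Import ring lra.
Import Order.TTheory GRing.Theory Num.Theory.
Local Open Scope classical_set_scope.
Local Open Scope ring_scope.
Local Open Scope ereal_scope.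

Section H.
Context (d : measure_display) (T : measurableType d) (R : realType).

Lemma Edef (P : probability T R) (f : T -> R) : 'E_P[f] = \int[P]_w (f w)%:E.
Proof. by rewrite unlock. Qed.

Lemma sq_int (P : probability T R) (f : T -> R) : measurable_fun setT f ->
  'E_P[fun w => (f w ^+ 2)%R] < +oo -> P.-integrable setT (EFin \o (fun w => (f w ^+ 2)%R)).
Proof.
move=> mf hf; apply/integrableP; split.
  by apply/measurable_EFinP; exact: measurable_funX.
rewrite (le_lt_trans _ hf)// Edef; apply: ge0_le_integral => //.
- apply: measurableT_comp => //; apply/measurable_EFinP; exact: measurable_funX.
- apply/measurable_EFinP; exact: measurable_funX.
- by move=> x _ /=; rewrite ger0_norm ?sqr_ge0.
Qed.


Lemma int_dom (P : probability T R) (f g h : T -> R) : measurable_fun setT h ->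
  P.-integrable setT (EFin \o f) -> P.-integrable setT (EFin \o g) ->
  (forall x, `|h x| <= f x + g x + 1)%R -> h \in Lfun P 1.
Proof.
move=> mh If Ig hb; apply/Lfun1_integrable.
apply: (@le_integrable _ _ _ _ _ measurableT _ ((EFin \o f) \+ (EFin \o g) \+ (EFin \o cst 1%R))).
- exact/measurable_EFinP.
- move=> x _ /=; rewrite lee_fin (le_trans (hb x))//; exact: ler_norm.
- apply: integrableD => //; first exact: integrableD.
  exact: finite_measure_integrable_cst.
Qed.

Lemma bnd1 (x y : R) : (`|x| <= x ^+ 2 + y ^+ 2 + 1)%R.
Proof. rewrite -[(x ^+ 2)%R](real_normK (num_real x)) -[(y ^+ 2)%R](real_normK (num_real y)); have := normr_ge0 x; have := normr_ge0 y; nra. Qed.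

Lemma bnd2 (x y : R) : (`|x * y| <= x ^+ 2 + y ^+ 2 + 1)%R.
Proof. rewrite normrM -[(x ^+ 2)%R](real_normK (num_real x)) -[(y ^+ 2)%R](real_normK (num_real y)); have := normr_ge0 x; have := normr_ge0 y; nra. Qed.

Lemma keyP (P : probability T R) (X Y : T -> R) (muX c : R)
  (mX : measurable_fun setT X) (mY : measurable_fun setT Y)
  (iX : P.-integrable setT (EFin \o (fun w => (X w ^+ 2)%R)))
  (iY : P.-integrable setT (EFin \o (fun w => (Y w ^+ 2)%R)))
  (EX : 'E_P[X] = muX%:E) :
  'E_P[fun w => ((X w - muX) * (Y w - c))%R] = (fine 'E_P[X \* Y] - muX * fine 'E_P[Y])%:E
  /\ 'E_P[fun w => (- ((X w - muX) * (Y w - c)))%R] = (- (fine 'E_P[X \* Y] - muX * fine 'E_P[Y]))%:E.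
Proof.
have lX : X \in Lfun P 1 by apply: (@int_dom _ _ _ _ mX iX iY) => x; exact: bnd1.
have lY : Y \in Lfun P 1.
  by apply: (@int_dom _ _ _ _ mY iX iY) => x; rewrite (addrC (X x ^+ 2)%R); exact: bnd1.
have lXY : (X \* Y)%R \in Lfun P 1.
  by apply: (@int_dom _ _ _ _ _ iX iY) => [|x]; [exact: measurable_funM | exact: bnd2].
have ef : (fun w => ((X w - muX) * (Y w - c))%R) =
   ((X \* Y) \- (muX \o* Y) \- (c \o* X) \+ cst (muX * c))%R.
  by apply/funext => w /=; ring.
have lf : ((X \* Y) \- (muX \o* Y) \- (c \o* X) \+ cst (muX * c))%R \in Lfun P 1.
  have lmY : (muX \o* Y)%R \in Lfun P 1 by apply: Lfun_scale.
  have lcX : (c \o* X)%R \in Lfun P 1 by apply: Lfun_scale.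
  by apply: rpredD; [apply: rpredB; [apply: rpredB|]|apply: Lfun_cst].
have E1 : 'E_P[fun w => ((X w - muX) * (Y w - c))%R] = (fine 'E_P[X \* Y] - muX * fine 'E_P[Y])%:E.
  rewrite ef expectationD ?rpredB ?Lfun_scale ?Lfun_cst // expectation_cst.
  rewrite expectationB ?rpredB ?Lfun_scale //.
  rewrite expectationB ?Lfun_scale //.
  rewrite !expectationZl // EX.
  rewrite -(fineK (expectation_fin_num lXY)) -(fineK (expectation_fin_num lY)) /=.
  by rewrite -!EFinD; congr EFin; ring.
split => //.
have -> : (fun w => (- ((X w - muX) * (Y w - c)))%R) = ((-1) \o* (fun w => ((X w - muX) * (Y w - c))%R))%R.
  by apply/funext => w /=; ring.
by rewrite expectationZl ?ef // -ef E1 -EFinM mulN1r.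
Qed.

Lemma lfun_of (P : probability T R) (X : T -> R) (mX : measurable_fun setT X)
  (iX : P.-integrable setT (EFin \o (fun w => (X w ^+ 2)%R))) : X \in Lfun P 1.
Proof. by apply: (@int_dom _ _ _ _ mX iX iX) => x; exact: bnd1. Qed.

Lemma E_neg (P : probability T R) (X : T -> R) : X \in Lfun P 1 ->
  'E_P[fun w => (- X w)%R] = - 'E_P[X].
Proof.
move=> lX; have -> : (fun w => (- X w)%R) = ((-1) \o* X)%R by apply/funext => w /=; ring.
by rewrite expectationZl // mulN1e.
Qed.
End H.

Lemma img_cst (R : realType) (A : set R) (f : R -> \bar R) k : A !=set0 ->
  (forall x, A x -> f x = k) -> [set f x | x in A] = [set k].
Proof.
move=> [a Aa] fk; apply/seteqP; split => [_ [x Ax <-]|_ ->] /=; first exact: fk.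
by exists a => //; exact: fk.
Qed.

Theorem corollary3p17 (d : measure_display) (T : measurableType d) (R : realType)
  (PP : set (probability T R)) (hPP : PP !=set0)
  (X Y : T -> R) (mX : measurable_fun setT X) (mY : measurable_fun setT Y)
  (h2 : Ehat PP (fun w => (X w ^+ 2)%R) + Ehat PP (fun w => (Y w ^+ 2)%R) < +oo)
  (muX : R) (hup : mu_up PP X = muX%:E) (hlo : mu_lo PP X = muX%:E) :
  let rhoY : R := ((fine (mu_up PP Y) + fine (mu_lo PP Y)) / 2)%R in
  upper_cov PP X Y = Ehat PP (fun w => ((X w - muX) * (Y w - rhoY))%R) /\
  lower_cov PP X Y = - Ehat PP (fun w => (- ((X w - muX) * (Y w - rhoY)))%R).
Proof.
move=> rhoY.
have [P0 PP0] := hPP.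
have Eub : forall Z P, PP P -> 'E_P[Z] <= Ehat PP Z.
  by move=> Z P HP; apply: ereal_sup_ubound; exists P.
have E2ge0 : forall Z : T -> R, Ehat PP (fun w => (Z w ^+ 2)%R) != -oo.
  move=> Z; rewrite -ltNye (lt_le_trans _ (Eub _ _ PP0))//.
  by rewrite (lt_le_trans _ (expectation_ge0 _ _))// => x; exact: sqr_ge0.
have hX2 : Ehat PP (fun w => (X w ^+ 2)%R) < +oo.
  move: h2; case: (Ehat PP (fun w => (X w ^+ 2)%R)) => [r _| h|]//; first exact: ltry.
  by move: h; rewrite addye ?E2ge0.
have hY2 : Ehat PP (fun w => (Y w ^+ 2)%R) < +oo.
  move: h2; case: (Ehat PP (fun w => (Y w ^+ 2)%R)) => [r _| h|]//; first exact: ltry.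
  by move: h; rewrite addey ?E2ge0.
have iX : forall P, PP P -> P.-integrable setT (EFin \o (fun w => (X w ^+ 2)%R)).
  by move=> P HP; apply: sq_int => //; exact: le_lt_trans (Eub _ _ HP) hX2.
have iY : forall P, PP P -> P.-integrable setT (EFin \o (fun w => (Y w ^+ 2)%R)).
  by move=> P HP; apply: sq_int => //; exact: le_lt_trans (Eub _ _ HP) hY2.
have EX : forall P, PP P -> 'E_P[X] = muX%:E.
  move=> P HP; apply/le_anti; apply/andP; split.
    by rewrite -hup; exact: Eub.
  have := Eub (fun w => (- X w)%R) P HP.
  rewrite E_neg; last exact: (@lfun_of _ _ _ _ _ mX (iX _ HP)).
  by move=> h; rewrite -hlo /mu_lo leeNl.
pose g P := (fine 'E_P[X \* Y] - muX * fine 'E_P[Y])%R.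
have Eup : forall c, Ehat PP (fun w => ((X w - muX) * (Y w - c))%R) = ereal_sup [set (g P)%:E | P in PP].
  move=> c; rewrite /Ehat; congr ereal_sup; apply: eq_imagel => P HP.
  exact: (@keyP _ _ _ _ _ _ _ c mX mY (iX _ HP) (iY _ HP) (EX _ HP)).1.
have Elo : forall c, Ehat PP (fun w => (- ((X w - muX) * (Y w - c)))%R) = ereal_sup [set (- g P)%:E | P in PP].
  move=> c; rewrite /Ehat; congr ereal_sup; apply: eq_imagel => P HP.
  exact: (@keyP _ _ _ _ _ _ _ c mX mY (iX _ HP) (iY _ HP) (EX _ HP)).2.
have MX : Mset PP X = [set muX].
  apply/seteqP; split => m /=; rewrite /Mset /= hlo hup.
    by move=> /andP[h1 h3]; apply/le_anti; rewrite -!lee_fin h1 h3.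
  by move=> ->; rewrite lexx.
have MY : Mset PP Y !=set0.
  have lY := @lfun_of _ _ _ _ _ mY (iY _ PP0).
  exists (fine 'E_P0[Y]); rewrite /Mset /= fineK ?expectation_fin_num //.
  apply/andP; split; last exact: Eub.
  by rewrite /mu_lo leeNl -E_neg //; exact: Eub.
split.
  rewrite /upper_cov MX (@img_cst _ _ _ (ereal_sup [set (g P)%:E | P in PP]) MY).
    by rewrite ereal_sup1 Eup.
  by move=> m2 _; rewrite image_set1 ereal_inf1 Eup.
rewrite /lower_cov MX (@img_cst _ _ _ (- ereal_sup [set (- g P)%:E | P in PP]) MY).
  by rewrite ereal_inf1 Elo.
by move=> m2 _; rewrite image_set1 ereal_sup1 Elo.
Qed.
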